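(* Let $v\ge 0$ and consider $$\min_{y\in\mathbb{R}^{n^-}}\ -\sum_{i=1}^{n^-}\left(\frac{y_i}{\lambda}\right)^{1/\beta}\quad\text{s.t.}\quad y_1\ge y_2\ge\cdots\ge y_{n^-}\ge 0,\qquad \sum_{i=1}^{n^-}h^-_iy_i=v.$$ There exists an index $L\in\{1,\dots,n^-\}$ such that $y^*$ with $y^*_i=Y$ for $1\le i\le L$ and $y^*_i=0$ for $L+1\le i\le n^-$, where $Y:=v/\sum_{i=1}^{L}h^-_i\ (\ge 0)$, is a global optimum of this problem.
   Context: Fix $N\in\mathbb{N}$, $\beta\in(0,1)$, $\lambda>0$, and an integer $1\le n^-\le N$. A function $f:[0,1]\to\mathbb{R}$ is inverse S-shaped if it is strictly increasing, continuously differentiable, and there is $x_0\in[0,1]$ such that $f'$ is strictly decreasing on $[0,x_0]$ and strictly increasing on $[x_0,1]$. Let $W^-:[0,1]\to[0,1]$ be inverse S-shaped with $W^-(0)=0$, $W^-(1)=1$, and $h^-_i:=W^-\!\left(\frac{i}{N}\right)-W^-\!\left(\frac{i-1}{N}\right)$ for $i=1,\dots,n^-$. *)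

(* Defs.v *)
From HB Require Import structures.
From mathcomp Require Import all_boot all_order all_algebra.
From mathcomp Require Import all_classical all_reals all_analysis.
Set Implicit Arguments. Unset Strict Implicit. Unset Printing Implicit Defensive.
Import Order.TTheory GRing.Theory Num.Theory.
Import numFieldNormedType.Exports.
Local Open Scope classical_set_scope.
Local Open Scope ring_scope.

Section Defs.
Variable R : realType.

Definition has_deriv01 (f f' : R -> R) (x : R) : Prop :=
  forall e : R, 0 < e -> exists2 d : R, 0 < d &
    forall y : R, 0 <= y <= 1 -> 0 < `|y - x| < d ->
      `|(f y - f x) / (y - x) - f' x| < e.

Definition inverse_S_shaped (f : R -> R) : Prop :=
  (forall x y : R, 0 <= x -> x < y -> y <= 1 -> f x < f y) /\
  exists f' : R -> R,
    (forall x : R, 0 <= x <= 1 -> has_deriv01 f f' x) /\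
    ({within [set x : R | 0 <= x <= 1], continuous f'}) /\
    exists2 x0 : R, 0 <= x0 <= 1 &
      (forall x y : R, 0 <= x -> x < y -> y <= x0 -> f' y < f' x) /\
      (forall x y : R, x0 <= x -> x < y -> y <= 1 -> f' x < f' y).

(* h^-_i for i = 1..n^-, indexed 0-based by i : 'I_nm (i represents i+1). *)
Definition hminus (W : R -> R) (N nm : nat) (i : 'I_nm) : R :=
  W (i.+1%:R / N%:R) - W (i%:R / N%:R).

Definition feasible (W : R -> R) (N nm : nat) (v : R) (y : 'I_nm -> R) : Prop :=
  (forall i j : 'I_nm, (i <= j)%N -> y j <= y i) /\
  (forall i : 'I_nm, 0 <= y i) /\
  \sum_(i < nm) hminus W N i * y i = v.

Definition objective (beta lambda : R) (nm : nat) (y : 'I_nm -> R) : R :=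
  - \sum_(i < nm) (y i / lambda) `^ (beta^-1).

Definition ystar (W : R -> R) (N nm : nat) (v : R) (L : nat) (i : 'I_nm) : R :=
  if (i < L)%N then v / (\sum_(j < nm | (j < L)%N) hminus W N j) else 0.

End Defs.

(* Main.v *)
Require Import Defs.
From HB Require Import structures.
From mathcomp Require Import all_boot all_order all_algebra.
From mathcomp Require Import all_classical all_reals all_analysis.
Import Order.TTheory GRing.Theory Num.Theory.
From mathcomp.algebra_tactics Require Import ring.
Local Open Scope ring_scope.

Lemma pow2pt (R : realType) (p t x y : R) : 1 <= p -> 0 <= t -> t <= 1 ->
  0 <= x -> 0 <= y ->
  (t * x + (1 - t) * y) `^ p <= t * x `^ p + (1 - t) * y `^ p.
Proof.
move=> p1 t0 t1 x0 y0.
have := @convex_powR R p p1 (Itv01 t0 t1) x y.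
rewrite !convRE /=.
apply.
  by rewrite inE /= in_itv /= x0.
by rewrite inE /= in_itv /= y0.
Qed.

Lemma jensen (R : realType) (p : R) (s : seq nat) (w a : nat -> R) :
  1 <= p -> (forall k, 0 <= w k) -> (forall k, 0 <= a k) ->
  \sum_(k <- s) w k = 1 ->
  (\sum_(k <- s) w k * a k) `^ p <= \sum_(k <- s) w k * a k `^ p.
Proof.
move=> p1 w0 a0; elim: s w w0 => [|x s IH] w w0.
  by rewrite big_nil => /eqP; rewrite eq_sym oner_eq0.
rewrite !big_cons => hs.
have rest0 : 0 <= \sum_(k <- s) w k by apply: sumr_ge0.
have t1 : w x <= 1 by rewrite -hs lerDl.
have [wx1|tne] := eqVneq (w x) 1.
  have hs0 : \sum_(k <- s) w k = 0.
    by move: hs; rewrite wx1 => /(congr1 (fun z => z - 1)); rewrite addrC addKr subrr.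
  rewrite wx1.
  have z : forall k, k \in s -> w k = 0.
    move=> k ks; apply/eqP; rewrite eq_le w0 andbT -hs0.
    rewrite (big_rem k ks) /= lerDl; exact: sumr_ge0.
  rewrite [X in _ + X]big_seq big1; last by move=> k ks; rewrite z // mul0r.
  rewrite [X in _ <= _ + X]big_seq big1; last by move=> k ks; rewrite z // mul0r.
  by rewrite !addr0 !mul1r.
have tlt : 0 < 1 - w x by rewrite subr_gt0 lt_neqAle tne t1.
pose w' k := w k / (1 - w x).
have hs' : \sum_(k <- s) w' k = 1.
  rewrite /w' -mulr_suml; apply: (mulIf (lt0r_neq0 tlt)).
  rewrite mul1r -mulrA mulVf ?lt0r_neq0 // mulr1; apply/eqP; rewrite -hs.
  by rewrite addrC addKr.
have IH' := IH w' (fun k => divr_ge0 (w0 k) (ltW tlt)) hs'.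
have e1 : \sum_(k <- s) w k * a k = (1 - w x) * \sum_(k <- s) w' k * a k.
  rewrite mulr_sumr; apply: eq_bigr => k _; rewrite /w'.
  by rewrite mulrA mulrCA mulfV ?lt0r_neq0 // mulr1.
have e2 : \sum_(k <- s) w k * a k `^ p = (1 - w x) * \sum_(k <- s) w' k * a k `^ p.
  rewrite mulr_sumr; apply: eq_bigr => k _; rewrite /w'.
  by rewrite mulrA mulrCA mulfV ?lt0r_neq0 // mulr1.
rewrite e1 e2.
apply: le_trans.
  apply: pow2pt => //.
  by apply: sumr_ge0 => k _; apply: mulr_ge0 => //; apply: divr_ge0 => //; exact: ltW.
by rewrite lerD2l ler_wpM2l // ltW.
Qed.

Lemma tele (R : zmodType) (nm : nat) (Y : nat -> R) (i : nat) :
  (i <= nm)%N -> Y nm = 0 ->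
  \sum_(j < nm) (if (i <= j)%N then Y j - Y j.+1 else 0) = Y i.
Proof.
move=> inm Ynm.
rewrite -(big_mkord xpredT (fun j => if (i <= j)%N then Y j - Y j.+1 else 0)).
rewrite (big_cat_nat (n:=i)) //=.
rewrite big_nat_cond big1 ?add0r; last first.
  by move=> j /andP[/andP[_ ji] _]; rewrite leqNgt ji.
rewrite (eq_big_nat _ _ (F2 := fun j => - (Y j.+1 - Y j))); last first.
  by move=> j /andP[ij _]; rewrite ij opprB.
by rewrite sumrN telescope_sumr // Ynm sub0r opprK.
Qed.

Theorem theorem2 (R : realType) (N : nat) (beta lambda : R) (nm : nat)
  (W : R -> R) (v : R) :
  (0 < N)%N -> 0 < beta < 1 -> 0 < lambda -> (1 <= nm <= N)%N ->
  inverse_S_shaped W -> W 0 = 0 -> W 1 = 1 ->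
  (forall x : R, 0 <= x <= 1 -> 0 <= W x <= 1) ->
  0 <= v ->
  exists L : nat, (1 <= L <= nm)%N /\
    0 <= v / (\sum_(j < nm | (j < L)%N) hminus W N j) /\
    @feasible R W N nm v (@ystar R W N nm v L) /\
    forall y : 'I_nm -> R, feasible W N v y ->
      objective beta lambda (@ystar R W N nm v L) <= objective beta lambda y.
Proof.
move=> N0 /andP[b0 b1] l0 /andP[nm1 nmN] [Wmono _] W0 W1 Wr v0.
set p := beta^-1.
have p1 : 1 <= p by rewrite /p invf_ge1 // ltW.
have Nr : 0 < N%:R :> R by rewrite ltr0n.
have hpos : forall j : 'I_nm, 0 < hminus W N j.
  move=> j; rewrite /hminus subr_gt0; apply: Wmono.
  - by rewrite divr_ge0.
  - by rewrite ltr_pM2r ?invr_gt0 // ltr_nat.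
  - rewrite ler_pdivrMr // mul1r ler_nat; apply: leq_trans nmN; exact: ltn_ord.
pose H L := \sum_(j < nm | (j < L)%N) hminus W N j.
have i0 : 'I_nm := Ordinal nm1.
have Hpos : forall L, (1 <= L)%N -> 0 < H L.
  move=> L L1; rewrite /H (bigD1 (Ordinal nm1)) //=.
  apply: (lt_le_trans (hpos (Ordinal nm1))); rewrite lerDl.
  by apply: sumr_ge0 => j _; apply: ltW.
have ys0 : forall L (i : 'I_nm), (1 <= L)%N -> 0 <= ystar W N v L i.
  move=> L i L1; rewrite /ystar; case: ifP => // _.
  by rewrite divr_ge0 //; apply: ltW; exact: (Hpos L L1).
pose g (k : 'I_nm) := \sum_(i < nm) (ystar W N v k.+1 i / lambda) `^ p.
have [k _ kmax] := @arg_maxP _ R _ (Ordinal nm1) xpredT g isT.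
exists k.+1; split; first by rewrite /= ltn_ord.
split; first by rewrite divr_ge0 //; apply: ltW; exact: (Hpos k.+1 isT).
split.
  split; [|split].
  - move=> i j ij; rewrite /ystar; case: ifP => jk.
      by rewrite (leq_ltn_trans ij jk).
    by apply: ys0.
  - by move=> i; apply: ys0.
  - rewrite (eq_bigr (fun i : 'I_nm => if (i < k.+1)%N then hminus W N i * (v / H k.+1) else 0)); last first.
      by move=> i _; rewrite /ystar; case: ifP => _ //; rewrite mulr0.
    rewrite -big_mkcond /= -mulr_suml -/(H k.+1) mulrCA mulfV ?mulr1 //.
    by rewrite lt0r_neq0 //; exact: Hpos k.+1 isT.
move=> y [ymono [ypos ysum]].
rewrite /objective lerN2.
have [v00|vne] := eqVneq v 0.
  have yz : forall i, y i = 0.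
    move=> i.
    have := @psumr_eq0P _ _ xpredT (fun i => hminus W N i * y i) _ _ i isT.
    rewrite /= => /(_ _ _) /eqP; rewrite mulf_eq0 (negbTE (lt0r_neq0 (hpos i))) /=.
    move=> /(_ _ _)/eqP; apply.
      by move=> j _; rewrite mulr_ge0 // ltW.
    by rewrite ysum v00.
  rewrite le_eqVlt; apply/orP; left; apply/eqP; apply: eq_bigr => i _.
  by rewrite yz /ystar v00 !mul0r; case: ifP => _; rewrite ?mul0r.
have vpos : 0 < v by rewrite lt_neqAle eq_sym vne v0.
pose Y j := if (j < nm)%N then y (insubd (Ordinal nm1) j) else 0.
have YE : forall i : 'I_nm, Y i = y i by move=> i; rewrite /Y ltn_ord valKd.
pose d j := Y j - Y j.+1.
have d0 : forall j, 0 <= d j.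
  move=> j; rewrite /d /Y subr_ge0; case: (ltnP j.+1 nm) => h.
    rewrite (ltnW h); apply: ymono; rewrite !insubdK //; exact: ltnW.
  case: ifP => // _; exact: ypos.
have Ynm : Y nm = 0 by rewrite /Y ltnn.
have tel : forall i : 'I_nm, \sum_(j < nm) (if (i <= j)%N then d j else 0) = y i.
  by move=> i; rewrite -YE (@tele _ _ Y _ (ltnW (ltn_ord i)) Ynm).
pose w j := d j * H j.+1 / v.
have w0 : forall j, 0 <= w j.
  move=> j; rewrite /w divr_ge0 ?mulr_ge0 //; apply: ltW; exact: (Hpos j.+1 isT).
have Hne : forall j, H j.+1 != 0 by move=> j; apply: lt0r_neq0; exact: (Hpos j.+1 isT).
have wsum : \sum_(0 <= j < nm) w j = 1.
  rewrite big_mkord /w -mulr_suml.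
  suff -> : \sum_(j < nm) d j * H j.+1 = v by rewrite mulfV.
  have -> : \sum_(j < nm) d j * H j.+1 =
      \sum_(j < nm) \sum_(l < nm) (if (l < j.+1)%N then d j * hminus W N l else 0).
    apply: eq_bigr => j _; rewrite /H mulr_sumr big_mkcond /=.
    by apply: eq_bigr => l _; case: ifP.
  rewrite exchange_big /= -ysum; apply: eq_bigr => l _.
  rewrite -tel mulr_sumr; apply: eq_bigr => j _; rewrite ltnS.
  by case: ifP => _; rewrite ?mulr0 // mulrC.
have yi : forall i : 'I_nm, y i / lambda =
    \sum_(0 <= j < nm) w j * (ystar W N v j.+1 i / lambda).
  move=> i; rewrite big_mkord -tel mulr_suml; apply: eq_bigr => j _.
  rewrite /ystar ltnS; case: ifP => _; last by rewrite !mul0r mulr0.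
  rewrite /w -/(H j.+1).
  move: (H j.+1) (Hne j) (d j) => h hn dj.
  rewrite mulrA; congr (_ / _).
  by rewrite mulrA divfK // mulfK.
change (\sum_(i < nm) (y i / lambda) `^ p <= g k).
apply: (@le_trans _ _ (\sum_(i < nm) \sum_(0 <= j < nm) w j * (ystar W N v j.+1 i / lambda) `^ p)).
  apply: ler_sum => i _; rewrite yi; apply: jensen => // j.
  by rewrite divr_ge0 ?ys0 // ltW.
rewrite (eq_bigr (fun i : 'I_nm => \sum_(j < nm) w j * (ystar W N v j.+1 i / lambda) `^ p)); last first.
  by move=> i _; rewrite big_mkord.
rewrite exchange_big /=.
apply: (@le_trans _ _ (\sum_(j < nm) w j * g k)).
  apply: ler_sum => j _; rewrite -mulr_sumr; apply: ler_wpM2l => //.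
  exact: (kmax j isT).
by rewrite -mulr_suml -(big_mkord xpredT w) wsum mul1r.
Qed.
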